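(* Let $n>0$ be a real number and let $\lambda=(\lambda_1,\dots,\lambda_\ell)$ and $\mu=(\mu_1,\dots,\mu_{\ell'})$ be finite weakly decreasing sequences of positive real numbers, each summing to $n$. If the multisets $\{\!\{\lambda_i\lambda_j : 1\le i<j\le \ell\}\!\}$ and $\{\!\{\mu_i\mu_j : 1\le i<j\le \ell'\}\!\}$ are equal, then $\lambda=\mu$ (that is, $\ell=\ell'$ and $\lambda_i=\mu_i$ for all $i$).
   Context: Multisets are compared with multiplicities. *)

(* Defs.v *)
From HB Require Import structures.
From mathcomp Require Import all_boot all_order all_algebra.
From mathcomp Require Import reals.
Set Implicit Arguments. Unset Strict Implicit. Unset Printing Implicit Defensive.
Import Order.TTheory GRing.Theory Num.Theory.
Local Open Scope ring_scope.

(* The list (multiset, up to perm_eq) of products s_i * s_j over index pairs i < j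
   (0-based indices into s). *)
Definition pair_products (R : realType) (s : seq R) : seq R :=
  [seq s`_(p.1) * s`_(p.2)
  | p <- [seq (i, j) | i <- iota 0 (size s), j <- iota 0 (size s)] & (p.1 < p.2)%N].

(* Main.v *)
Require Import Defs.
From HB Require Import structures.
From mathcomp Require Import all_boot all_order all_algebra.
From mathcomp Require Import reals lra.
Import Order.TTheory GRing.Theory Num.Theory.
Set Implicit Arguments. Unset Strict Implicit.
Local Open Scope ring_scope.

Definition psum (R : realType) (s : seq R) (N : nat) : R := \sum_(x <- s) x ^+ N.

Lemma pair_identity (R : realType) (s : seq R) (N : nat) :
  psum s N ^+ 2 = psum s (N * 2) + 2 * \sum_(x <- pair_products s) x ^+ N.
Proof.
set m := size s.
have E : iota 0 m = index_iota 0 m by rewrite /index_iota subn0.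
have -> : psum s N = \sum_(i < m) s`_i ^+ N by rewrite /psum (big_nth 0) big_mkord.
have -> : psum s (N*2) = \sum_(i < m) (s`_i ^+ N) ^+ 2.
  by rewrite /psum (big_nth 0) big_mkord; apply: eq_bigr => i _; rewrite exprM.
have -> : \sum_(x <- pair_products s) x ^+ N =
   \sum_(i < m) \sum_(j < m) (if (i < j)%N then s`_i ^+ N * s`_j ^+ N else 0).
  rewrite /pair_products big_map big_filter big_mkcond big_allpairs -/m E big_mkord.
  apply: eq_bigr => i _; rewrite big_mkord; apply: eq_bigr => j _ /=.
  by case: ifP => // _; rewrite exprMn.
rewrite expr2 big_distrl.
have -> : \sum_(i < m) (s`_i ^+ N * \sum_(j < m) s`_j ^+ N) =
  \sum_(i < m) \sum_(j < m) ((if (i < j)%N then s`_i ^+ N * s`_j ^+ N else 0)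
    + (if (j < i)%N then s`_j ^+ N * s`_i ^+ N else 0)
    + (if i == j then (s`_i ^+ N) ^+ 2 else 0)).
  apply: eq_bigr => i _; rewrite big_distrr; apply: eq_bigr => j _.
  case: (ltngtP i j) => Hij.
  - by rewrite ?eqE /= ?(ltn_eqF Hij) ?addr0.
  - by rewrite ?eqE /= ?(gtn_eqF Hij) ?add0r ?addr0 mulrC.
  - have -> : i = j by apply: val_inj.
    by rewrite ?ltnn eqxx !add0r expr2.
under eq_bigr => i _ do rewrite big_split big_split.
rewrite big_split big_split [X in _ + X + _ = _]exchange_big.
have -> : \sum_(i < m) \sum_(j < m) (if i == j then (s`_i ^+ N) ^+ 2 else 0)
   = \sum_(i < m) (s`_i ^+ N) ^+ 2.
  apply: eq_bigr => i _; rewrite -big_mkcond.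
  rewrite (eq_bigl (fun j => j == i)); last by move=> j; rewrite eq_sym.
  by rewrite big_pred1_eq.
by rewrite addrC mulr2n mulrDl mul1r addrA.
Qed.
Lemma psum_cons (R : realType) (x : R) s N : psum (x :: s) N = x ^+ N + psum s N.
Proof. by rewrite /psum big_cons. Qed.

Lemma psum_ge0 (R : realType) (s : seq R) N : all (fun x => 0 < x) s -> 0 <= psum s N.
Proof.
elim: s => [|x s IH] /=; first by rewrite /psum big_nil.
move=> /andP[hx hs]; by rewrite psum_cons addr_ge0 ?IH ?exprn_ge0 ?ltW.
Qed.

Lemma psum_le (R : realType) (b : R) (s : seq R) N :
  all (fun x => 0 < x) s -> all (fun x => x <= b) s -> psum s N <= (size s)%:R * b ^+ N.
Proof.
elim: s => [|x s IH] /=; first by rewrite /psum big_nil mul0r.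
move=> /andP[hx hs] /andP[hxb hsb]; rewrite psum_cons -add1n natrD mulrDl mul1r.
by rewrite lerD ?IH // lerXn2r // ?nnegrE ltW // (lt_le_trans hx).
Qed.

Lemma bern (R : realType) (c : R) N : 1 <= c -> 1 + N%:R * (c - 1) <= c ^+ N.
Proof.
move=> hc; elim: N => [|N IH]; first by rewrite mul0r addr0 expr0.
rewrite exprS -natr1.
have h0 : 0 <= c - 1 by rewrite subr_ge0.
apply: (le_trans _ (ler_wpM2l (le_trans ler01 hc) IH)).
have h2 : 0 <= N%:R * ((c - 1) * (c - 1)) :> R by rewrite mulr_ge0 ?mulr_ge0.
nra.
Qed.

Lemma dominate (R : realType) (a b : R) (m : nat) : 0 < b -> b < a ->
  exists k, m%:R * b ^+ (2 ^ k) < a ^+ (2 ^ k).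
Proof.
move=> hb hab.
set c := a / b.
have hc1 : 1 < c by rewrite /c ltr_pdivlMr // mul1r.
have hcd : 0 < c - 1 by rewrite subr_gt0.
set k := Num.Def.archi_bound (m%:R / (c - 1)).
exists k.
have hk : m%:R / (c - 1) < k%:R :> R by apply: archi_boundP; rewrite divr_ge0 // ltW.
have hk2 : k%:R <= (2 ^ k)%:R :> R by rewrite ler_nat ltnW // ltn_expl.
have hm : m%:R < (2 ^ k)%:R * (c - 1) :> R.
  by rewrite -ltr_pdivrMr //; apply: lt_le_trans hk hk2.
have hb2 := bern (2 ^ k) (ltW hc1).
have hcm : m%:R < c ^+ (2 ^ k) by apply: (lt_le_trans _ hb2); lra.
have -> : a = c * b by rewrite /c divfK // gt_eqF.
by rewrite exprMn ltr_pM2r // exprn_gt0.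
Qed.

Lemma head_not_gt (R : realType) (a b : R) (s t : seq R) :
  sorted >=%R (b :: t) -> all (fun x => 0 < x) (a :: s) -> all (fun x => 0 < x) (b :: t) ->
  (forall k, psum (a :: s) (2 ^ k) = psum (b :: t) (2 ^ k)) -> ~ (b < a).
Proof.
move=> st ps pt E hab.
have hb : 0 < b by case/andP: pt.
have [k hk] := dominate (size (b :: t)) hb hab.
have hall : all (fun x => x <= b) (b :: t).
  rewrite /= lexx /=.
  have := order_path_min (@ge_trans _ _) st.
  by apply: sub_all => x.
have h1 := psum_le (2 ^ k) pt hall.
have h2 : a ^+ (2 ^ k) <= psum (a :: s) (2 ^ k).
  by rewrite psum_cons lerDl psum_ge0 //; case/andP: ps.
have := lt_le_trans (le_lt_trans h1 hk) h2.
by rewrite E ltxx.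
Qed.

Lemma psum_pos (R : realType) (b : R) t N : all (fun x => 0 < x) (b :: t) -> 0 < psum (b :: t) N.
Proof.
case/andP=> hb ht; rewrite psum_cons.
have := psum_ge0 N ht; have := exprn_gt0 N hb; lra.
Qed.

Lemma eq_of_psum (R : realType) (s t : seq R) :
  sorted >=%R s -> sorted >=%R t -> all (fun x => 0 < x) s -> all (fun x => 0 < x) t ->
  (forall k, psum s (2 ^ k) = psum t (2 ^ k)) -> s = t.
Proof.
elim: s t => [|a s IH] [|b t] //= ss st ps pt E.
- have := psum_pos (2 ^ 0) pt; by rewrite -E /psum big_nil ltxx.
- have := psum_pos (2 ^ 0) ps; by rewrite E /psum big_nil ltxx.
have eab : a = b.
  apply/eqP; rewrite eq_le !leNgt; apply/andP; split; apply/negP => h.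
  - exact: (head_not_gt st ps pt E h).
  - by apply: (head_not_gt ss pt ps _ h) => k; rewrite E.
subst b; congr (_ :: _); apply: IH.
- exact: path_sorted ss.
- exact: path_sorted st.
- by case/andP: ps.
- by case/andP: pt.
- by move=> k; have := E k; rewrite !psum_cons => /addrI.
Qed.

Theorem mainTheorem4 (R : realType) (n : R) (lam mu : seq R) :
  0 < n ->
  sorted >=%R lam -> sorted >=%R mu ->
  all (fun x => 0 < x) lam -> all (fun x => 0 < x) mu ->
  \sum_(x <- lam) x = n -> \sum_(x <- mu) x = n ->
  perm_eq (pair_products lam) (pair_products mu) ->
  lam = mu.
Proof.
move=> _ sl sm pl pm sumL sumM pp.
apply: eq_of_psum => // k; elim: k => [|k IH].
  rewrite /psum expn0.
  under eq_bigr => x _ do rewrite expr1.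
  under [RHS]eq_bigr => x _ do rewrite expr1.
  by rewrite sumL sumM.
have hq : \sum_(x <- pair_products lam) x ^+ (2 ^ k) = \sum_(x <- pair_products mu) x ^+ (2 ^ k).
  exact: perm_big.
have h1 := pair_identity lam (2 ^ k).
have h2 := pair_identity mu (2 ^ k).
rewrite expnSr.
apply: (addIr (2 * \sum_(x <- pair_products lam) x ^+ (2 ^ k))).
by rewrite -h1 hq -h2 IH.
Qed.
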